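(* For each $n\ge1$, the natural truncation map $\pi_n:\mathfrak{krv}^{(n+1)}\to\mathfrak{krv}^{(n)}$ is a surjective Lie algebra homomorphism.
   Context: Let $\mathbb{L}$ be the degree completion of the free Lie algebra over $\mathbb{C}$ on $x,y$ (degree = number of letters), $\mathsf{A}$ the degree-completed free associative algebra on $x,y$, $\mathrm{cyc}=\mathsf{A}/[\mathsf{A},\mathsf{A}]$ (quotient by the span of $ab-ba$) with quotient map $\mathrm{tr}$. For $n\ge1$, $\mathbb{L}_{\le n}$, $\mathsf{A}_{\le n}$, $\mathrm{cyc}_{\le n}$ denote quotients by elements of degree $\ge n+1$. $\mathfrak{tder}_{\le n}$ is the Lie algebra (under commutator) of tangential derivations of $\mathbb{L}_{\le n}$: Lie derivations $u$ with $u(x)=[x,u_1]$, $u(y)=[y,u_2]$ for some $u_1,u_2\in\mathbb{L}_{\le n}$, written $u=(u_1,u_2)$. Writing $a=a_0+\partial_x(a)x+\partial_y(a)y$ uniquely, the divergence is $j(u)=\mathrm{tr}(\partial_x(u_1)x+\partial_y(u_2)y)\in\mathrm{cyc}_{\le n}$. The projections $\pi_n:\mathfrak{tder}_{\le n+1}\to\mathfrak{tder}_{\le n}$ are induced by $\mathbb{L}_{\le n+1}\to\mathbb{L}_{\le n}$. $\mathfrak{krv}^{(n)}$ is the Lie subalgebra of $u\in\mathfrak{tder}_{\le n}$ for which $u(x+y)=0$ in $\mathbb{L}_{\le n}$ and there exists $r\in\mathbb{C}[[z]]/z^{n+1}$ with $j(u)=\mathrm{tr}(r(x+y)-r(x)-r(y))$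 in $\mathrm{cyc}_{\le n}$. *)

(* Defs.v *)
From mathcomp Require Import all_boot all_algebra.
From mathcomp Require Import complex.
From mathcomp Require Import Rstruct.
Set Implicit Arguments. Unset Strict Implicit. Unset Printing Implicit Defensive.
Import GRing.Theory.
Local Open Scope ring_scope.

Definition C : fieldType := Rdefinitions.R[i].

Section Defs.
Variable F : fieldType.

(* Words in the letters x (= false) and y (= true); the degree of a word is its
   length.  The degree completion A of the free associative algebra on x,y is
   the algebra of noncommutative formal power series, i.e. arbitrary
   coefficient functions on words. *)
Definition word := seq bool.
Definition ser := word -> F.

Definition szero : ser := fun _ => 0.
Definition sadd (a b : ser) : ser := fun w => a w + b w.
Definition sopp (a : ser) : ser := fun w => - a w.
Definition ssub (a b : ser) : ser := fun w => a w - b w.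
Definition sscale (c : F) (a : ser) : ser := fun w => c * a w.
Definition smul (a b : ser) : ser :=
  fun w => \sum_(i < (size w).+1) a (take i w) * b (drop i w).
Definition sbr (a b : ser) : ser := ssub (smul a b) (smul b a).

Definition sX : ser := fun w => if w == [:: false] then 1 else 0.
Definition sY : ser := fun w => if w == [:: true] then 1 else 0.

Definition hcomp (d : nat) (a : ser) : ser :=
  fun w => if size w == d then a w else 0.

(* Equality in the truncation A_{<= n} (quotient by degree >= n+1). *)
Definition eqn (n : nat) (a b : ser) : Prop :=
  forall w : word, (size w <= n)%N -> a w = b w.

(* Lie polynomials: the (non-completed) free Lie algebra on x,y inside A,
   i.e. the smallest subspace containing x, y and closed under brackets. *)
Inductive liepoly : ser -> Prop :=
| lp_x : liepoly sX
| lp_y : liepoly sY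
| lp_zero : liepoly szero
| lp_add a b : liepoly a -> liepoly b -> liepoly (sadd a b)
| lp_scale c a : liepoly a -> liepoly (sscale c a)
| lp_br a b : liepoly a -> liepoly b -> liepoly (sbr a b)
| lp_ext a b : (forall w, a w = b w) -> liepoly a -> liepoly b.

(* The degree completion L of the free Lie algebra, as a subset of A:
   series all of whose homogeneous components are Lie polynomials.
   Elements of L_{<= n} are represented by elements of L, equality being eqn n. *)
Definition isLie (a : ser) : Prop := forall d : nat, liepoly (hcomp d a).

(* A pair u = (u1,u2) of Lie series determines the
   continuous derivation of A (restricting to a Lie derivation of L, and
   inducing one of each L_{<= n}) with x |-> [x,u1], y |-> [y,u2]. *)
Definition tpair := (ser * ser)%type.
Definition is_tder (u : tpair) : Prop := isLie u.1 /\ isLie u.2.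

Definition gen_img (u : tpair) (l : bool) : ser :=
  if l then sbr sY u.2 else sbr sX u.1.

(* Derivation on words: D(l_1...l_k) = sum_i l_1..l_{i-1} D(l_i) l_{i+1}..l_k;
   coefficient of w in D(a) = sum over w = p q s and letters l of
   a(p l s) * D(l)(q). *)
Definition act (u : tpair) (a : ser) : ser :=
  fun w => \sum_(i < (size w).+1) \sum_(j < (size w).+1 | (i <= j)%N)
             \sum_(l : bool)
               a (take i w ++ l :: drop j w) * gen_img u l (drop i (take j w)).

Definition der_eq (n : nat) (u v : tpair) : Prop :=
  forall a, isLie a -> eqn n (act u a) (act v a).

(* w represents the commutator [D_u, D_v] as a derivation of L_{<= n}. *)
Definition is_tbracket (n : nat) (u v w : tpair) : Prop :=
  forall a, isLie a -> eqn n (act w a) (ssub (act u (act v a)) (act v (act u a))).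

(* w represents the linear combination c D_u + D_v as a derivation of L_{<= n}. *)
Definition is_tlincomb (n : nat) (c : F) (u v w : tpair) : Prop :=
  forall a, isLie a -> eqn n (act w a) (sadd (sscale c (act u a)) (act v a)).

(* Partial derivatives: a = a_0 + dx(a) x + dy(a) y. *)
Definition dx (a : ser) : ser := fun w => a (rcons w false).
Definition dy (a : ser) : ser := fun w => a (rcons w true).

(* Equality in cyc_{<= n} = A_{<= n} / [A_{<= n}, A_{<= n}]:
   tr a = tr b iff a - b is a finite sum of commutators modulo degree >= n+1. *)
Definition cyc_eq (n : nat) (a b : ser) : Prop :=
  exists s : seq (ser * ser),
    forall w : word, (size w <= n)%N ->
      a w - b w = \sum_(pq <- s) (smul pq.1 pq.2 w - smul pq.2 pq.1 w).

(* The divergence (lifted to A; j(u) = tr (jdiv u)). *)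
Definition jdiv (u : tpair) : ser := sadd (smul (dx u.1) sX) (smul (dy u.2) sY).

(* For r = sum_k r_k z^k: r(x+y), r(x), r(y) as series. *)
Definition r_xy (r : nat -> F) : ser := fun w => r (size w).
Definition r_x (r : nat -> F) : ser := fun w => if all (fun b => ~~ b) w then r (size w) else 0.
Definition r_y (r : nat -> F) : ser := fun w => if all (fun b => b) w then r (size w) else 0.
Definition rform (r : nat -> F) : ser := ssub (ssub (r_xy r) (r_x r)) (r_y r).

(* KRV condition on a representing pair (r in C[[z]]/z^{n+1}: only r_0..r_n
   matter for cyc_eq n). *)
Definition krv_pair (n : nat) (u : tpair) : Prop :=
  [/\ is_tder u,
      eqn n (act u (sadd sX sY)) szero
    & exists r : nat -> F, cyc_eq n (jdiv u) (rform r)].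

(* u (a tangential derivation of L_{<= n}, given by some pair) lies in krv^(n). *)
Definition in_krv (n : nat) (u : tpair) : Prop :=
  is_tder u /\ exists u' : tpair, krv_pair n u' /\ der_eq n u' u.

End Defs.

(* Main.v *)
Require Import Defs.
From mathcomp Require Import all_boot all_algebra.
From mathcomp Require Import zify.
Set Implicit Arguments. Unset Strict Implicit. Unset Printing Implicit Defensive.
Import GRing.Theory.
Local Open Scope ring_scope.

Definition sproj (F : fieldType) (m : nat) (a : ser F) : ser F :=
  fun w => if (size w <= m)%N then a w else 0.
Definition pproj (F : fieldType) (m : nat) (u : tpair F) : tpair F :=
  (sproj m u.1, sproj m u.2).

Lemma smul_l_proj (F : fieldType) (g a : ser F) m q :
  (forall w, size w != 1%N -> g w = 0) ->
  smul g (sproj m a) q = if (size q <= m.+1)%N then smul g a q else 0.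
Proof.
move=> hg; rewrite /smul; case: ifP => hq.
- apply: eq_bigr => [[k hk]] _ /=; rewrite /sproj.
  case: (eqVneq (size (take k q)) 1%N) => h1; last by rewrite (hg _ h1) !mul0r.
  have := cat_take_drop k q; move/(congr1 size); rewrite size_cat h1 => e.
  by rewrite ifT //; lia.
- apply: big1 => [[k hk]] _ /=; rewrite /sproj.
  case: (eqVneq (size (take k q)) 1%N) => h1; last by rewrite (hg _ h1) !mul0r.
  have := cat_take_drop k q; move/(congr1 size); rewrite size_cat h1 => e.
  by rewrite ifF ?mulr0 //; lia.
Qed.

Lemma smul_r_proj (F : fieldType) (g a : ser F) m q :
  (forall w, size w != 1%N -> g w = 0) ->
  smul (sproj m a) g q = if (size q <= m.+1)%N then smul a g q else 0.
Proof.
move=> hg; rewrite /smul; case: ifP => hq.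
- apply: eq_bigr => [[k hk]] _ /=; rewrite /sproj.
  case: (eqVneq (size (drop k q)) 1%N) => h1; last by rewrite (hg _ h1) !mulr0.
  have := cat_take_drop k q; move/(congr1 size); rewrite size_cat h1 => e.
  by rewrite ifT //; lia.
- apply: big1 => [[k hk]] _ /=; rewrite /sproj.
  case: (eqVneq (size (drop k q)) 1%N) => h1; last by rewrite (hg _ h1) !mulr0.
  have := cat_take_drop k q; move/(congr1 size); rewrite size_cat h1 => e.
  by rewrite ifF ?mul0r //; lia.
Qed.

Lemma sX1 (F : fieldType) w : size w != 1%N -> sX F w = 0.
Proof. by move=> h; rewrite /sX; case: eqP => // e; rewrite e in h. Qed.
Lemma sY1 (F : fieldType) w : size w != 1%N -> sY F w = 0.
Proof. by move=> h; rewrite /sY; case: eqP => // e; rewrite e in h. Qed.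

Lemma gen_img_proj (F : fieldType) m (u : tpair F) l q :
  gen_img (pproj m u) l q = if (size q <= m.+1)%N then gen_img u l q else 0.
Proof.
rewrite /gen_img /sbr /ssub; case: l => /=.
- rewrite smul_l_proj ?smul_r_proj //; try exact: sY1.
  by case: ifP; rewrite ?subr0.
- rewrite smul_l_proj ?smul_r_proj //; try exact: sX1.
  by case: ifP; rewrite ?subr0.
Qed.

Lemma act_proj_local (F : fieldType) m (u : tpair F) a w :
  (size w <= m.+1)%N -> act (pproj m u) a w = act u a w.
Proof.
move=> hw; rewrite /act; apply: eq_bigr => i _; apply: eq_bigr => j _.
apply: eq_bigr => l _; rewrite gen_img_proj ifT //.
rewrite size_drop size_take; case: ifP => _.
all: have := ltn_ord j; lia.
Qed.

Lemma act_proj_xy (F : fieldType) m (u : tpair F) w :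
  size w = m.+2 -> act (pproj m u) (sadd (sX F) (sY F)) w = 0.
Proof.
move=> hw; rewrite /act; apply: big1 => [[i hi]] _; apply: big1 => [[j hj]] /= hij.
apply: big1 => l _.
case: (eqVneq (size (take i w ++ l :: drop j w)) 1%N) => h1; last first.
  by rewrite /sadd sX1 ?sY1 // addr0 mul0r.
move: h1; rewrite size_cat /= size_take size_drop => /eqP e.
have i0 : i = 0%N :> nat by move: e; case: ifP => _; lia.
have jw : j = size w :> nat by move: e; case: ifP => _; lia.
rewrite i0 drop0 jw take_size gen_img_proj ifF ?mulr0 //; lia.
Qed.

Lemma jdiv_local (F : fieldType) (u : tpair F) w :
  jdiv u w = u.1 w * (\sum_(k < (size w).+1) sX F (drop k w))
           + u.2 w * (\sum_(k < (size w).+1) sY F (drop k w)).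
Proof.
rewrite /jdiv /sadd /smul /dx /dy; congr (_ + _); rewrite big_distrr;
  apply: eq_bigr => [[k hk]] _ /=.
- rewrite /sX; case: eqP => e; last by rewrite !mulr0.
  have hw : rcons (take k w) false = w by rewrite -cats1 -e cat_take_drop.
  by rewrite hw.
- rewrite /sY; case: eqP => e; last by rewrite !mulr0.
  have hw : rcons (take k w) true = w by rewrite -cats1 -e cat_take_drop.
  by rewrite hw.
Qed.

Lemma jdiv_proj (F : fieldType) m (u : tpair F) w :
  jdiv (pproj m u) w = sproj m (jdiv u) w.
Proof.
rewrite [RHS]/sproj !jdiv_local /= /sproj; case: ifP => _ //.
by rewrite !mul0r addr0.
Qed.

Definition rproj (F : fieldType) m (r : nat -> F) : nat -> F :=
  fun k => if (k <= m)%N then r k else 0.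

Lemma rform_proj (F : fieldType) m (r : nat -> F) w :
  rform (rproj m r) w = sproj m (rform r) w.
Proof.
rewrite /rform /ssub /r_xy /r_x /r_y /sproj /rproj.
by case: ifP => _ //; case: all; case: all; rewrite ?subr0.
Qed.

Lemma smul_hcomp (F : fieldType) i j (p q : ser F) w :
  smul (hcomp i p) (hcomp j q) w =
  if (i + j == size w)%N then p (take i w) * q (drop i w) else 0.
Proof.
rewrite /smul /hcomp; case: ifP => /eqP e.
- have hi : (i < (size w).+1)%N by lia.
  rewrite (bigD1 (Ordinal hi)) //= [X in _ + X]big1 ?addr0.
    rewrite size_takel; last lia.
    by rewrite eqxx size_drop ifT //; apply/eqP; lia.
  move=> k /eqP hk; rewrite size_takel; last by have := ltn_ord k; lia.
  rewrite ifF ?mul0r //; apply/eqP => ek; apply: hk; apply: val_inj => /=; lia.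
- apply: big1 => k _; rewrite size_takel; last by have := ltn_ord k; lia.
  rewrite size_drop; case: eqP => ek; last by rewrite mul0r.
  rewrite ifF ?mulr0 //; apply/eqP => ek2; apply: e; have := ltn_ord k; lia.
Qed.

Lemma proj_smul (F : fieldType) m (p q : ser F) w :
  sproj m (smul p q) w =
  \sum_(0 <= d < m.+1) \sum_(0 <= i < d.+1) smul (hcomp i p) (hcomp (d - i) q) w.
Proof.
transitivity (\sum_(0 <= d < m.+1) (if d == size w then
     \sum_(0 <= i < d.+1) p (take i w) * q (drop i w) else 0)).
  rewrite -big_mkcond /= big_nat1_eq /sproj /smul big_mkord.
  by case: ifP.
apply: eq_big_nat => d hd; case: eqP => e.
- apply: eq_big_nat => i hi; rewrite smul_hcomp ifT //; apply/eqP; lia.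
- rewrite big1_seq // => i /andP [_]; rewrite mem_index_iota => hi.
  rewrite smul_hcomp ifF //; apply/eqP; lia.
Qed.

Definition Lpairs (F : fieldType) m (p q : ser F) : seq (ser F * ser F) :=
  flatten [seq [seq (hcomp i p, hcomp (d - i) q) | i <- index_iota 0 d.+1]
          | d <- index_iota 0 m.+1].

Lemma comm_proj (F : fieldType) m (p q : ser F) w :
  sproj m (smul p q) w - sproj m (smul q p) w =
  \sum_(pq <- Lpairs m p q) (smul pq.1 pq.2 w - smul pq.2 pq.1 w).
Proof.
rewrite /Lpairs big_flatten big_map !proj_smul -sumrB.
apply: eq_bigr => d _; rewrite big_map !sumrB; congr (_ - _).
rewrite [LHS]big_nat_rev; apply: eq_big_nat => i hi /=.
rewrite add0n subSS; have -> : (d - (d - i) = i)%N by lia.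
done.
Qed.

Lemma eqn_S (F : fieldType) n (a b : ser F) : Defs.eqn n.+1 a b -> Defs.eqn n a b.
Proof. by move=> h w hw; apply: h; apply: leqW. Qed.

Lemma cyc_S (F : fieldType) n (a b : ser F) : cyc_eq n.+1 a b -> cyc_eq n a b.
Proof. by move=> [s h]; exists s => w hw; apply: h; apply: leqW. Qed.

Lemma der_S (F : fieldType) n (u v : tpair F) : der_eq n.+1 u v -> der_eq n u v.
Proof. by move=> h a ha; apply: eqn_S; apply: h. Qed.

Lemma krv_S (F : fieldType) n (u : tpair F) : krv_pair n.+1 u -> krv_pair n u.
Proof.
case=> h1 h2 [r h3]; split => //; first exact: eqn_S.
by exists r; apply: cyc_S.
Qed.

Lemma isLie_proj (F : fieldType) m (a : ser F) : isLie a -> isLie (sproj m a).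
Proof.
move=> h d; case: (leqP d m) => hd.
- apply: (lp_ext _ (h d)) => w; rewrite /hcomp /sproj.
  by case: eqP => // ->; rewrite hd.
- apply: (lp_ext _ (lp_zero F)) => w; rewrite /hcomp /sproj /szero.
  case: eqP => // ->; by rewrite leqNgt hd.
Qed.

Lemma lift_krv (F : fieldType) m (u : tpair F) :
  krv_pair m.+1 u -> krv_pair m.+2 (pproj m u).
Proof.
case=> [[h1 h2]] hxy [r [s hs]]; split.
- by split; apply: isLie_proj.
- move=> w hw; rewrite /szero; case: (ltnP m.+1 (size w)) => hw2.
  + by apply: act_proj_xy; lia.
  + by rewrite act_proj_local // hxy.
- exists (rproj m r); exists (flatten [seq Lpairs m pq.1 pq.2 | pq <- s]).
  move=> w _; rewrite jdiv_proj rform_proj big_flatten big_map /=.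
  under eq_bigr do rewrite -comm_proj.
  rewrite /sproj; case: ifP => hw.
  + by rewrite hs //; apply: leqW.
  + by rewrite subrr big1 // => pq _; rewrite subrr.
Qed.

Theorem lemma3p12 (n : nat) : (1 <= n)%N ->
  [/\ (* pi_n is well defined on derivations *)
      (forall u v : tpair C, is_tder u -> is_tder v ->
         der_eq n.+1 u v -> der_eq n u v),
      (* pi_n maps krv^(n+1) into krv^(n) *)
      (forall u : tpair C, in_krv n.+1 u -> in_krv n u),
      (* pi_n is linear *)
      (forall (c : C) (u v w : tpair C), in_krv n.+1 u -> in_krv n.+1 v ->
         in_krv n.+1 w -> is_tlincomb n.+1 c u v w -> is_tlincomb n c u v w),
      (* pi_n preserves the bracket *)
      (forall u v w : tpair C, in_krv n.+1 u -> in_krv n.+1 v ->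
         in_krv n.+1 w -> is_tbracket n.+1 u v w -> is_tbracket n u v w)
    & (* pi_n is surjective *)
      (forall u : tpair C, in_krv n u ->
         exists v : tpair C, in_krv n.+1 v /\ der_eq n v u)].
Proof.
move=> hn; split.
- by move=> u v _ _; apply: der_S.
- move=> u [hu [u' [hk hd]]]; split => //; exists u'; split.
    exact: krv_S.
  exact: der_S.
- by move=> c u v w _ _ _ h a ha; apply: eqn_S; apply: h.
- by move=> u v w _ _ _ h a ha; apply: eqn_S; apply: h.
- move=> u [hu [u' [hk hd]]].
  case: n hn hk hd => [//|m] _ hk hd.
  exists (pproj m u'); split.
  + split; first by case: (lift_krv hk).
    exists (pproj m u'); split; first exact: lift_krv.
    by move=> a _ w _.
  + move=> a ha w hw; rewrite act_proj_local //; exact: hd.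
Qed.
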